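(* Fix $i\in[n]$ and $\mathbf{x}_{-i}\in\mathcal{C}_{-i}$, write $A=A(\mathbf{x}_{-i})$, and suppose $\mathbf{x}_i=(x_{ij})$ is a best response of player $i$, i.e. $\mathbf{x}_i\in\arg\max_{\mathbf{y}\in\vartheta_i(\mathbf{x}_{-i})}\mathcal{V}_i(\mathbf{y};\mathbf{x}_{-i})$. Then $(x_{ij})_{j\in A}$ is of one of the following two types. Type I: there is $J\subset A$ such that $x_{ij}=0$ for $j\in A\setminus J$, $\sum_{j\in J}x_{ij}<1$, and $(x_{ij})_{j\in J}$ is the unique solution (with $x_{ij}\in(0,\omega_{ij}-\mathbf{x}_T^{j|i})$) of the system $\psi_{ij}(x_{ij};\mathbf{x}_T^{j|i})=0$, $j\in J$. Type II: there are $J\subset A$ and a real $\kappa_0\ge0$ such that $x_{ij}=0$ for $j\in A\setminus J$, and $(x_{ij})_{j\in J}$ is given by the unique solution (with $x_{ij}\in(0,\omega_{ij}-\mathbf{x}_T^{j|i})$) of the system $\sum_{j\in J}x_{ij}=1$ and $x_{ij}^{a_i-1}\psi_{ij}(x_{ij};\mathbf{x}_T^{j|i})=\kappa_0$ for $j\in J$.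
   Context: Fragile multi-CPR Game: $n,m\ge1$, $[k]=\{1,\dots,k\}$, $C_m=\{(x_1,\dots,x_m)\in[0,1]^m:\sum_j x_j\le1\}$, $\mathcal{C}_{-i}=\prod_{[n]\setminus\{i\}}C_m$; for a profile $(\mathbf{x}_i,\mathbf{x}_{-i})$, $\mathbf{x}_\ell=(x_{\ell1},\dots,x_{\ell m})$, put $\mathbf{x}_T^{(j)}=\sum_{\ell}x_{\ell j}$ and $\mathbf{x}_T^{j|i}=\sum_{\ell\ne i}x_{\ell j}$. Each CPR $j$ has a return rate $\mathcal{R}_j(t)>1$ and failure probability $p_j(t)\in[0,1]$; each player $i$ has parameters $a_i,k_i$. Effective rate: $\mathcal{F}_{ij}(t)=(\mathcal{R}_j(t)-1)^{a_i}(1-p_j(t))-k_ip_j(t)$; utility $\mathcal{V}_i(\mathbf{x}_i;\mathbf{x}_{-i})=\sum_j x_{ij}^{a_i}\mathcal{F}_{ij}(\mathbf{x}_T^{(j)})$. Assumption: (1) $p_j(0)=0$, $p_j(t)=1$ for $t\ge1$; (2) $a_i\in(0,1]$, $k_i>0$; (3) each $\mathcal{F}_{ij}$ (continuous on $[0,1]$) has strictly negative first and second derivatives on $(0,1)$. Let $\omega_{ij}\in(0,1)$ be the unique zero of $\mathcal{F}_{ij}$ in $(0,1)$. Active CPRs: $A(\mathbf{x}_{-i})=\{j:\mathbf{x}_T^{j|i}<\omega_{ij}\}$. Constraint policy: $\vartheta_i(\mathbf{x}_{-i})=C_m\cap\big(\prod_{j\in A(\mathbf{x}_{-i})}[0,\omega_{ij}-\mathbf{x}_T^{j|i}]\times\prod_{j\notin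 A(\mathbf{x}_{-i})}\{0\}\big)$. Define $\psi_{ij}(x;s)=x\,\mathcal{F}_{ij}'(x+s)+a_i\mathcal{F}_{ij}(x+s)$. *)

(* Defs.v *)
From HB Require Import structures.
From mathcomp Require Import all_boot all_order all_algebra.
From mathcomp Require Import all_classical all_reals all_analysis.
Set Implicit Arguments. Unset Strict Implicit. Unset Printing Implicit Defensive.
Import Order.TTheory GRing.Theory Num.Theory.
Import numFieldNormedType.Exports.
Local Open Scope ring_scope.

Definition inCm (R : realType) (m : nat) (y : 'I_m -> R) : Prop :=
  (forall j, 0 <= y j <= 1) /\ \sum_(j < m) y j <= 1.

Definition Feff (R : realType) (Rr p : R -> R) (a k : R) (t : R) : R :=
  (Rr t - 1) `^ a * (1 - p t) - k * p t.

Definition others_total (R : realType) (n m : nat) (i : 'I_n)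
  (X : 'I_n -> 'I_m -> R) (j : 'I_m) : R :=
  \sum_(l < n | l != i) X l j.

Definition utility (R : realType) (m : nat) (a : R) (F : 'I_m -> R -> R)
  (s : 'I_m -> R) (y : 'I_m -> R) : R :=
  \sum_(j < m) (y j) `^ a * F j (y j + s j).

Definition active (R : realType) (m : nat) (w s : 'I_m -> R) : {set 'I_m} :=
  [set j | s j < w j].

Definition theta (R : realType) (m : nat) (w s : 'I_m -> R) (y : 'I_m -> R) : Prop :=
  inCm y /\
  (forall j, j \in active w s -> 0 <= y j <= w j - s j) /\
  (forall j, j \notin active w s -> y j = 0).

Definition psi (R : realType) (F : R -> R) (a : R) (x s : R) : R :=
  x * derive1 F (x + s) + a * F (x + s).

(* Main.v *)
Require Import Defs.
From HB Require Import structures.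
From mathcomp Require Import all_boot all_order all_algebra.
From mathcomp Require Import all_classical all_reals all_analysis.
From mathcomp Require Import ring lra.
Import Order.TTheory GRing.Theory Num.Theory.
Import numFieldNormedType.Exports.
Local Open Scope classical_set_scope.
Local Open Scope ring_scope.

Definition lo {R : realType} (f : R -> R) (t d : R) := forall e, 0 < e ->
  exists2 eta, 0 < eta & forall h, `|h| < eta -> `|f (t + h) - f t - h * d| <= e * `|h|.

Lemma lo_max (R : realType) (f : R -> R) (t d : R) : lo f t d ->
  (exists2 r, 0 < r & forall h, `|h| < r -> f (t + h) <= f t) -> d = 0.
Proof.
move=> lf [r r0 hr]; apply/eqP; apply: contraT => dn0.
have ad : 0 < `|d| by rewrite normr_gt0.
have [eta eta0 He] := lf (`|d| / 2) ltac:(lra).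
set mm := Num.min eta r.
have mm0 : 0 < mm by rewrite lt_min eta0 r0.
have mme : mm <= eta by rewrite ge_min lexx.
have mmr : mm <= r by rewrite ge_min lexx orbT.
set c := mm / (2 * `|d|).
have c0 : 0 < c by rewrite divr_gt0 // mulr_gt0.
have hcd : `|c * d| = mm / 2.
  rewrite normrM gtr0_norm // /c; field; by rewrite gt_eqF.
have h1 := He (c * d) ltac:(rewrite hcd; lra).
have h2 := hr (c * d) ltac:(rewrite hcd; lra).
move: h1; rewrite hcd => /ler_normlP [h1 _].
have dd : d * d = `|d| * `|d| by rewrite -normrM ger0_norm // -expr2 sqr_ge0.
have : c * d * d = mm / 2 * `|d|.
  rewrite -mulrA dd /c; field; by rewrite gt_eqF.
nra.
Qed.

Lemma lo_maxl (R : realType) (f : R -> R) (t d : R) : lo f t d ->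
  (exists2 r, 0 < r & forall h, 0 < h < r -> f (t - h) <= f t) -> 0 <= d.
Proof.
move=> lf [r r0 hr]; rewrite leNgt; apply/negP => dn0.
have [eta eta0 He] := lf (- d / 2) ltac:(lra).
set mm := Num.min eta r.
have mm0 : 0 < mm by rewrite lt_min eta0 r0.
have mme : mm <= eta by rewrite ge_min lexx.
have mmr : mm <= r by rewrite ge_min lexx orbT.
have h1 := He (- (mm/2)) ltac:(rewrite normrN gtr0_norm; lra).
have h2 := hr (mm/2) ltac:(lra).
have hm2 : 0 < mm / 2 by lra.
move: h1; rewrite normrN (gtr0_norm hm2).
move=> /ler_normlP [h1 _].
nra.
Qed.

Lemma lo_pair (R : realType) (f g : R -> R) (t u d c : R) : lo f t d -> lo g u c ->
  lo (fun h => f (t + h) + g (u - h)) 0 (d - c).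
Proof.
move=> lf lg e e0.
have [e1 e10 H1] := lf (e/2) ltac:(lra).
have [e2 e20 H2] := lg (e/2) ltac:(lra).
exists (Num.min e1 e2); first by rewrite lt_min e10 e20.
move=> h; rewrite lt_min => /andP [h1 h2].
have := H1 h h1; have := H2 (- h) ltac:(by rewrite normrN).
rewrite normrN !add0r !addr0 subr0.
set A := f (t + h) - f t - h * d.
set B := g (u + - h) - g u - - h * c.
have -> : f (t + h) + g (u - h) - (f t + g u) - h * (d - c) = A + B.
  rewrite /A /B; ring.
move=> hB hA; apply: (le_trans (ler_normD _ _)); lra.
Qed.

Lemma lo_of_derive {R : realType} (f : R -> R) (t d : R) : is_derive t 1 f d -> lo f t d.
Proof.
move=> [df dv] e e0.
have := df; rewrite /derivable => /cvg_ex [l Hl].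
have ld : l = d by rewrite -dv /derive (cvg_lim _ Hl).
subst l.
move/cvgrPdist_le : Hl => /(_ e e0).
rewrite /dnbhs /within /= => /nbhs_ballP [eta eta0 H].
exists eta => // h hh.
have [->|h0] := eqVneq h 0; first by rewrite addr0 subrr !mul0r subr0 normr0 mulr0.
have := H h; rewrite /ball /= sub0r normrN => /(_ hh h0).
rewrite /= [h *: 1]mulr1 addrC => Hh.
have -> : f (t + h) - f t - h * d = - h * (d - h^-1 * (f (t+h) - f t)).
  by field.
rewrite normrM normrN [X in _ <= X]mulrC; apply: ler_wpM2l => //.
by move: Hh; rewrite (addrC h t) [X in `|X| <= _ -> _]addrC.
Qed.

Lemma shift_derive {R : realType} (F : R -> R) (s t : R) : derivable F (t + s) 1 ->
  is_derive t 1 (fun u => F (u + s)) (derive1 F (t + s)).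
Proof.
move=> dF.
have E : (fun h : R => h^-1 *: (((fun u => F (u + s)) \o shift t) (h *: 1) - F (t + s)))
   = (fun h : R => h^-1 *: ((F \o shift (t + s)) (h *: 1) - F (t + s))).
  by apply/funext => h /=; rewrite addrA.
apply: DeriveDef.
  by rewrite /derivable E.
by rewrite derive1E /derive E.
Qed.
Lemma g_derive {R : realType} (F : R -> R) (a s t : R) : 0 < a -> 0 < t -> derivable F (t + s) 1 ->
  is_derive t 1 (fun u => u `^ a * F (u + s)) (t `^ (a - 1) * psi F a t s).
Proof.
move=> a0 t0 dF.
have h1 := @shift_derive R F s t dF.
have h2 : is_derive t 1 (fun u : R => u `^ a) (a * t `^ (a - 1)) by apply: is_derive1_powR.
have H := is_deriveM h2 h1.
have E : ((fun u : R => u `^ a) * (fun u : R => F (u + s))) = (fun u : R => u `^ a * F (u + s)).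
  by apply/funext.
rewrite E in H.
apply: (is_derive_eq H).
rewrite /psi /= -(mulr_powRB1 (ltW t0) a0) /GRing.scale /=.
ring.
Qed.


Lemma decr_oo {R : realType} (f : R -> R) :
  (forall t, 0 < t < 1 -> derivable f t 1 /\ derive1 f t < 0) ->
  {in `]0, 1[%R &, {homo f : x y /~ x < y}}.
Proof.
move=> H.
have H' : forall t, t \in `]0, 1[%R -> derivable f t 1 /\ derive1 f t < 0.
  by move=> t; rewrite in_itv /= => /H.
apply: ltr0_derive1_lt_oo.
- by move=> t ht; have /H [] : 0 < t < 1 by move: ht; rewrite ?inE /= ?in_itv /=.
- by move=> t ht; have /H [] : 0 < t < 1 by move: ht; rewrite ?inE /= ?in_itv /=.
move=> t ht; have /H [dt _] : 0 < t < 1 by move: ht; rewrite ?inE /= ?in_itv /=.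
apply: differentiable_continuous.
exact/derivable1_diffP.
Qed.

Lemma mono_facts {R : realType} (F : R -> R) (a s w : R) :
  {in `]0, 1[%R &, {homo F : x y /~ x < y}} ->
  {in `]0, 1[%R &, {homo derive1 F : x y /~ x < y}} ->
  (forall t, 0 < t < 1 -> derive1 F t < 0) ->
  0 <= s -> 0 < w < 1 -> F w = 0 -> 0 < a <= 1 ->
  forall u v, 0 < u -> u < v -> v < w - s ->
  psi F a v s < psi F a u s /\
  v `^ (a - 1) * psi F a v s < u `^ (a - 1) * psi F a u s.
Proof.
move=> hFd hF'd hF'n s0 /andP [w0 w1] Fw /andP [a0 a1] u v u0 uv vw.
have iu : u + s \in `]0, 1[%R by rewrite in_itv /=; apply/andP; split; lra.
have iv : v + s \in `]0, 1[%R by rewrite in_itv /=; apply/andP; split; lra.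
have iw : w \in `]0, 1[%R by rewrite in_itv /=; apply/andP; split; lra.
have Fuv : F (v + s) < F (u + s) by apply: hFd => //; lra.
have Fv0 : 0 < F (v + s) by rewrite -Fw; apply: hFd => //; lra.
have F'uv : derive1 F (v + s) < derive1 F (u + s) by apply: hF'd => //; lra.
have F'u0 : derive1 F (u + s) < 0 by apply: hF'n; lra.
rewrite /psi; split.
  have h1 : 0 < (v - u) * (- derive1 F (u + s)) by apply: mulr_gt0; lra.
  have h2 : 0 < v * (derive1 F (u + s) - derive1 F (v + s)) by apply: mulr_gt0; lra.
  have h3 : 0 < a * (F (u + s) - F (v + s)) by apply: mulr_gt0; lra.
  nra.
set P := u `^ (a - 1); set Q := v `^ (a - 1).
have Q0 : 0 < Q by apply: powR_gt0; lra.
have PQ : Q <= P.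
  have e : a - 1 = - (1 - a) by ring.
  rewrite /P /Q e !powRN lef_pV2 ?posrE ?powR_gt0 //; try lra.
  by apply: ge0_ler_powR; rewrite ?nnegrE; lra.
have uP : u * P = u `^ a by rewrite /P mulr_powRB1 //; lra.
have vQ : v * Q = v `^ a by rewrite /Q mulr_powRB1 //; lra.
have uva : u `^ a < v `^ a by apply: gt0_ltr_powR; rewrite ?nnegrE; lra.
have h1 : 0 <= (P - Q) * F (u + s) by apply: mulr_ge0; lra.
have h2 : 0 < Q * (F (u + s) - F (v + s)) by apply: mulr_gt0; lra.
have h3 : 0 < (v `^ a - u `^ a) * (- derive1 F (u + s)) by apply: mulr_gt0; lra.
have h4 : 0 <= v `^ a * (derive1 F (u + s) - derive1 F (v + s)).
  by apply: mulr_ge0; [apply: powR_ge0|lra].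
have -> : P * (u * derive1 F (u + s) + a * F (u + s)) =
  u `^ a * derive1 F (u + s) + a * (P * F (u + s)) by rewrite -uP; ring.
have -> : Q * (v * derive1 F (v + s) + a * F (v + s)) =
  v `^ a * derive1 F (v + s) + a * (Q * F (v + s)) by rewrite -vQ; ring.
have h5 : 0 < a * (P * F (u + s) - Q * F (v + s)) by apply: mulr_gt0; nra.
nra.
Qed.

Lemma decr_inj {R : realType} (phi : R -> R) (b : R) :
  (forall u v, 0 < u -> u < v -> v < b -> phi v < phi u) ->
  forall u v, 0 < u < b -> 0 < v < b -> phi u = phi v -> u = v.
Proof.
move=> H u v /andP [u0 ub] /andP [v0 vb] e.
case: (ltgtP u v) => // uv.
  by have := H u v u0 uv vb; rewrite e ltxx.
by have := H v u v0 uv ub; rewrite e ltxx.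
Qed.

Definition upd {R : realType} {m : nat} (x : 'I_m -> R) (j : 'I_m) (v : R) : 'I_m -> R :=
  fun k => if k == j then v else x k.

Lemma sum_upd {R : realType} (m : nat) (G : 'I_m -> R -> R) (x : 'I_m -> R) j v :
  \sum_(k < m) G k (upd x j v k) = \sum_(k < m) G k (x k) - G j (x j) + G j v.
Proof.
rewrite (bigD1 j) //= [in RHS](bigD1 j) //= /upd eqxx.
rewrite (eq_bigr (fun k => G k (x k))); last by move=> k /negbTE ->.
ring.
Qed.

Theorem theorem8 (R : realType) (n m : nat)
  (Rr p : 'I_m -> R -> R) (a k : 'I_n -> R) (w : 'I_n -> 'I_m -> R)
  (hm : (0 < m)%N)
  (* return rates > 1, failure probabilities in [0,1] *)
  (hR : forall j (t : R), 0 <= t -> 1 < Rr j t)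
  (hp : forall j (t : R), 0 <= t -> 0 <= p j t <= 1)
  (* Assumption (1) *)
  (hp0 : forall j, p j 0 = 0)
  (hp1 : forall j t, 1 <= t -> p j t = 1)
  (* Assumption (2) *)
  (ha : forall l, 0 < a l <= 1)
  (hk : forall l, 0 < k l)
  (* Assumption (3) *)
  (hFc : forall l j, {within `[(0:R), 1], continuous (Feff (Rr j) (p j) (a l) (k l))})
  (hF1 : forall l j (t : R), 0 < t < 1 ->
     derivable (Feff (Rr j) (p j) (a l) (k l)) t 1 /\
     derive1 (Feff (Rr j) (p j) (a l) (k l)) t < 0)
  (hF2 : forall l j (t : R), 0 < t < 1 ->
     derivable (derive1 (Feff (Rr j) (p j) (a l) (k l))) t 1 /\
     derive1 (derive1 (Feff (Rr j) (p j) (a l) (k l))) t < 0)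
  (* omega_lj : the zero of F_lj in (0,1) *)
  (hw : forall l j, 0 < w l j < 1 /\ Feff (Rr j) (p j) (a l) (k l) (w l j) = 0)
  (i : 'I_n) (X : 'I_n -> 'I_m -> R)
  (hX : forall l, l != i -> inCm (X l))
  (x : 'I_m -> R) :
  let F := fun j => Feff (Rr j) (p j) (a i) (k i) in
  let s := others_total i X in
  let A := active (w i) s in
  theta (w i) s x ->
  (forall y, theta (w i) s y -> utility (a i) F s y <= utility (a i) F s x) ->
  (* Type I *)
  (exists J : {set 'I_m}, [/\ J \subset A,
     (forall j, j \in A :\: J -> x j = 0),
     \sum_(j in J) x j < 1,
     (forall j, j \in J -> 0 < x j < w i j - s j /\ psi (F j) (a i) (x j) (s j) = 0) &
     (forall z : 'I_m -> R,
        (forall j, j \in J -> 0 < z j < w i j - s j /\ psi (F j) (a i) (z j) (s j) = 0) ->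
        forall j, j \in J -> z j = x j)])
  \/
  (* Type II *)
  (exists (J : {set 'I_m}) (kappa0 : R), [/\ J \subset A, 0 <= kappa0,
     (forall j, j \in A :\: J -> x j = 0),
     (\sum_(j in J) x j = 1 /\
      forall j, j \in J -> 0 < x j < w i j - s j /\
        (x j) `^ (a i - 1) * psi (F j) (a i) (x j) (s j) = kappa0) &
     (forall z : 'I_m -> R,
        (\sum_(j in J) z j = 1 /\
         forall j, j \in J -> 0 < z j < w i j - s j /\
           (z j) `^ (a i - 1) * psi (F j) (a i) (z j) (s j) = kappa0) ->
        forall j, j \in J -> z j = x j)]).
Proof.
move=> F s A hth hmax.
have [a0 a1] : 0 < a i /\ a i <= 1 by case/andP: (ha i).
have s0 : forall j, 0 <= s j.
  move=> j; rewrite /s /others_total; apply: sumr_ge0 => l li.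
  by have [h _] := hX l li; case/andP: (h j).
have hwj : forall j, 0 < w i j /\ w i j < 1 by move=> j; case: (hw i j) => /andP.
have Fw : forall j, F j (w i j) = 0 by move=> j; case: (hw i j).
have Fd : forall j, {in `]0, 1[%R &, {homo F j : x y /~ x < y}}.
  by move=> j; apply: decr_oo; exact: (hF1 i j).
have F'd : forall j, {in `]0, 1[%R &, {homo derive1 (F j) : x y /~ x < y}}.
  by move=> j; apply: decr_oo; exact: (hF2 i j).
have F'n : forall j t, 0 < t < 1 -> derive1 (F j) t < 0.
  by move=> j t ht; case: (hF1 i j t ht).
have inA : forall j, (j \in A) = (s j < w i j) by move=> j; rewrite /A /active inE.
have mono : forall j, forall u v, 0 < u -> u < v -> v < w i j - s j ->
    psi (F j) (a i) v (s j) < psi (F j) (a i) u (s j) /\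
    v `^ (a i - 1) * psi (F j) (a i) v (s j) < u `^ (a i - 1) * psi (F j) (a i) u (s j).
  move=> j; have [w0 w1] := hwj j.
  apply: (@mono_facts R (F j) (a i) (s j) (w i j) (Fd j) (F'd j) (F'n j) (s0 j)) => //; by apply/andP; split.
case: hth => [[hbox hsum] [hact hin]].
pose box (y : 'I_m -> R) := (forall q, q \notin A -> y q = 0) /\
   (forall q, q \in A -> 0 <= y q <= w i q - s q).
have boxx : box x by split.
have box_upd : forall y j v, box y -> j \in A -> 0 <= v <= w i j - s j -> box (upd y j v).
  move=> y j v [b1 b2] jA hv; split => q; rewrite /upd.
    by case: eqP => [->|_]; [rewrite jA|exact: b1].
  by case: eqP => [->|_ kA] //; exact: b2.
have box_theta : forall y, box y -> \sum_(q < m) y q <= 1 -> theta (w i) s y.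
  move=> y [b1 b2] hs; split; last by split => // q kA; exact: b2.
  split => // q; case kA: (q \in A).
    have := b2 q kA; have := hwj q; have := s0 q; move=> ? [? ?] /andP [? ?].
    by apply/andP; split; lra.
  by rewrite b1 ?kA // lexx ler01.
pose g j := fun u => u `^ a i * F j (u + s j).
have U : forall y j v, utility (a i) F s (upd y j v) =
    utility (a i) F s y - g j (y j) + g j v.
  by move=> y j v; exact: (@sum_upd R m (fun q u => u `^ a i * F q (u + s q)) y j v).
have Sm : forall (y : 'I_m -> R) (j : 'I_m) (v : R), \sum_(q < m) upd y j v q = \sum_(q < m) y q - y j + v.
  move=> y j v; rewrite (bigD1 j) //= [in RHS](bigD1 j) //= /upd eqxx.
  rewrite (eq_bigr (fun q => y q)); last by move=> q /negbTE ->.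
  ring.
pose S := \sum_(q < m) x q.
pose J := [set j | (j \in A) && (0 < x j)]%SET.
have JA : J \subset A by apply/fintype.subsetP => j; rewrite inE => /andP [].
have hx0 : forall j, j \notin J -> x j = 0.
  move=> j; rewrite inE negb_and => /orP [jA|xj]; first exact: hin.
  case jA : (j \in A); last by apply: hin; rewrite jA.
  by have /andP [h1 _] := hact j jA; apply/eqP; rewrite eq_le h1 andbT leNgt.
have sumJ : \sum_(j in J) x j = S.
  rewrite /S big_mkcond /=; apply: eq_bigr => j _.
  by case: ifP => // /negbT /hx0 ->.
have xJ : forall j, j \in J -> 0 < x j /\ j \in A.
  by move=> j; rewrite inE => /andP [].
have strict : forall j, j \in J -> x j < w i j - s j.
  move=> j jJ; have [xj0 jA] := xJ j jJ.
  have /andP [_ xle] := hact j jA.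
  rewrite lt_neqAle xle andbT; apply/negP => /eqP xe.
  have sj := s0 j; have [wj0 wj1] := hwj j.
  have jA' := jA; rewrite inA in jA'.
  pose v := x j / 2.
  have hb : box (upd x j v) by apply: box_upd => //; apply/andP; split; rewrite /v; lra.
  have ht : theta (w i) s (upd x j v).
    apply: box_theta => //; rewrite Sm; rewrite /v; lra.
  have := hmax _ ht; rewrite U.
  have -> : g j (x j) = 0 by rewrite /g xe addrNK Fw mulr0.
  have : 0 < g j v.
    apply: mulr_gt0; first by apply: powR_gt0; rewrite /v; lra.
    rewrite -(Fw j); apply: Fd; rewrite ?in_itv /=; try (apply/andP; split); rewrite /v; lra.
  lra.
have xlt1 : forall j, j \in J -> 0 < x j + s j < 1.
  move=> j jJ; have [xj0 _] := xJ j jJ; have := strict j jJ; have := s0 j; have := hwj j.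
  by move=> [? ?] ? ?; apply/andP; split; lra.
pose D j := x j `^ (a i - 1) * psi (F j) (a i) (x j) (s j).
have loj : forall j, j \in J -> lo (g j) (x j) (D j).
  move=> j jJ; apply: lo_of_derive; apply: g_derive => //.
    by case: (xJ j jJ).
  by case: (hF1 i j _ (xlt1 j jJ)).
have Sle : S <= 1 by exact: hsum.
have zeroAJ : forall j, j \in A :\: J -> x j = 0.
  by move=> j; rewrite inE => /andP [jnJ _]; exact: hx0.
have hj : forall j, j \in J -> [/\ 0 < x j, x j < w i j - s j, 0 <= s j, j \in A &
    w i j < 1].
  move=> j jJ; have [? ?] := xJ j jJ; have [? ?] := hwj j.
  by split => //; exact: strict.

case: (ltP S 1) => [Slt|Sge].
  have psix : forall j, j \in J -> psi (F j) (a i) (x j) (s j) = 0.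
    move=> j jJ; have [xj0 xjw sj jA wj1] := hj j jJ.
    have D0 : D j = 0.
      apply: (@lo_max R _ _ _ (loj j jJ)).
      exists (Num.min (x j) (Num.min (w i j - s j - x j) (1 - S))).
        by rewrite !lt_min; apply/and3P; split; lra.
      move=> h; rewrite !lt_min !ltr_norml => /and3P [/andP [h1 h2] /andP [h3 h3'] /andP [h4 h4']].
      have hb : box (upd x j (x j + h)).
        by apply: box_upd => //; apply/andP; split; lra.
      have ht : theta (w i) s (upd x j (x j + h)).
        by apply: box_theta => //; rewrite Sm; rewrite -/S; lra.
      have := hmax _ ht; rewrite U; lra.
    move: D0; rewrite /D => /eqP; rewrite mulf_eq0 => /orP [|/eqP //].
    by rewrite gt_eqF // powR_gt0.
  left; exists J; split => //; first by rewrite sumJ.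
    move=> j jJ; have [xj0 xjw sj jA wj1] := hj j jJ.
    by split; [apply/andP | exact: psix].
  move=> z hz j jJ; have [xj0 xjw sj jA wj1] := hj j jJ.
  have [/andP [zj0 zjw] pz] := hz j jJ.
  apply: (@decr_inj R (fun u => psi (F j) (a i) u (s j)) (w i j - s j)).
  - by move=> u v u0 uv vw; case: (mono j u v u0 uv vw).
  - by apply/andP.
  - by apply/andP.
  by rewrite /= pz psix.
have S1 : S = 1 by apply/eqP; rewrite eq_le Sle Sge.
case: (set_0Vmem J) => [J0 | [j0 j0J]].
  by move: sumJ; rewrite J0 big_set0 S1 => /eqP; rewrite eq_sym oner_eq0.
have [xj00 xj0w sj0 j0A wj01] := hj j0 j0J.
have Deq : forall j, j \in J -> D j = D j0.
  move=> j jJ; case: (eqVneq j j0) => [-> //|jj0].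
  have [xj0 xjw sj jA wj1] := hj j jJ.
  apply/eqP; rewrite -subr_eq0; apply/eqP.
  apply: (@lo_max R _ _ _ (@lo_pair R _ _ _ _ _ _ (loj j jJ) (loj j0 j0J))).
  exists (Num.min (Num.min (x j) (w i j - s j - x j)) (Num.min (x j0) (w i j0 - s j0 - x j0))).
    by rewrite !lt_min; apply/andP; split; apply/andP; split; lra.
  move=> h; rewrite !lt_min !ltr_norml.
  move=> /andP [/andP [/andP [h1 h2] /andP [h3 h3']] /andP [/andP [h5 h6] /andP [h7 h7']]].
  pose y := upd (upd x j (x j + h)) j0 (x j0 - h).
  have yj0 : upd x j (x j + h) j0 = x j0 by rewrite /upd eq_sym (negbTE jj0).
  have hb : box y.
    apply: (box_upd) => //; last by apply/andP; split; lra.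
    by apply: box_upd => //; apply/andP; split; lra.
  have ht : theta (w i) s y by apply: box_theta => //; rewrite /y Sm yj0 Sm -/S; lra.
  have := hmax _ ht; rewrite /y U yj0 U /= ?add0r ?addr0 ?subr0; lra.
have K0 : 0 <= D j0.
  apply: (@lo_maxl R _ _ _ (loj j0 j0J)).
  exists (x j0) => // h /andP [h1 h2].
  have hb : box (upd x j0 (x j0 - h)) by apply: box_upd => //; apply/andP; split; lra.
  have ht : theta (w i) s (upd x j0 (x j0 - h)) by apply: box_theta => //; rewrite Sm -/S; lra.
  have := hmax _ ht; rewrite U; lra.
right; exists J, (D j0); split => //.
  split; first by rewrite sumJ.
  move=> j jJ; have [xj0 xjw sj jA wj1] := hj j jJ.
  by split; [apply/andP | exact: Deq].
move=> z [_ hz] j jJ; have [xj0 xjw sj jA wj1] := hj j jJ.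
have [/andP [zj0 zjw] pz] := hz j jJ.
apply: (@decr_inj R (fun u => u `^ (a i - 1) * psi (F j) (a i) u (s j)) (w i j - s j)).
- by move=> u v u0 uv vw; case: (mono j u v u0 uv vw).
- by apply/andP.
- by apply/andP.
by rewrite /= pz; have := Deq j jJ; rewrite /D => ->.
Qed.
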